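(* Let $\Sigma=\{a,b\}$ and let $A,B,C$ be positive integers. For $w\in\mathbb{P}^\Sigma$ and $M\in[0..B]^\Sigma_\Sigma$ let $\mathrm{angle}(w,M)=w+M\mathbb{P}^\Sigma$. For $v\in\mathbb{P}^\Sigma$ let $$\mathrm{reg}(v)=\{u\in\mathbb{P}^\Sigma:\ \forall w\in[0;A]^\Sigma\ \forall M\in[0..B]^\Sigma_\Sigma\ \ (v\in\mathrm{angle}(w,M)\iff u\in\mathrm{angle}(w,M))\}.$$ Then for each $v\in\mathbb{N}^\Sigma$ there exists $v'\in\mathbb{N}^\Sigma$ such that $\|v'\|=O(AB^2+BC)$, $v'\in\mathrm{reg}(v)$, and $v-v'\in C\mathbb{Z}^\Sigma$; the implicit constant is absolute (independent of $A,B,C,v$).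
   Context: $\mathbb{P}$ denotes the set of non-negative rationals, $[0..B]=\{0,1,\ldots,B\}$, $[0;A]$ the set of rationals in the interval from $0$ to $A$. $[0..B]^\Sigma_\Sigma$ is the set of $\Sigma\times\Sigma$ matrices with entries in $[0..B]$; for a matrix $M$ with columns $M^x$ and $\lambda\in\mathbb{P}^\Sigma$, $M\lambda=\sum_x\lambda_xM^x$, and $M\mathbb{P}^\Sigma=\{M\lambda:\lambda\in\mathbb{P}^\Sigma\}$; $w+X=\{w+x:x\in X\}$. For $v\in\mathbb{Q}^\Sigma$, $\|v\|=\max_x|v(x)|$; $C\mathbb{Z}^\Sigma=\{Cz:z\in\mathbb{Z}^\Sigma\}$. *)

(* Defs.v *)
(* Sigma = {a,b} is modelled by the index type 'I_2;
   vectors in Q^Sigma are column vectors 'cV[rat]_2, matrices in Q^Sigma_Sigma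
   are 'M[rat]_2 (column x of M is M^x), and M lambda = M *m lambda. *)
From HB Require Import structures.
From mathcomp Require Import all_boot all_order all_algebra.
Set Implicit Arguments. Unset Strict Implicit. Unset Printing Implicit Defensive.
Import Order.TTheory GRing.Theory Num.Theory.
Local Open Scope ring_scope.

Definition vec := 'cV[rat]_2.

Definition nonneg (v : vec) : Prop := forall i : 'I_2, 0 <= v i 0.

Definition natvec (v : vec) : Prop := forall i : 'I_2, exists n : nat, v i 0 = n%:R.

Definition ratbox (A : nat) (w : vec) : Prop :=
  forall i : 'I_2, 0 <= w i 0 /\ w i 0 <= A%:R.

Definition intmat (B : nat) (M : 'M[rat]_2) : Prop :=
  forall i j : 'I_2, exists k : nat, (k <= B)%N /\ M i j = k%:R.

Definition in_angle (w : vec) (M : 'M[rat]_2) (u : vec) : Prop :=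
  exists lam : vec, nonneg lam /\ u = w + M *m lam.

Definition in_reg (A B : nat) (v u : vec) : Prop :=
  nonneg u /\
  forall (w : vec) (M : 'M[rat]_2), ratbox A w -> intmat B M ->
    (in_angle w M v <-> in_angle w M u).

Definition vnorm (v : vec) : rat := \big[Num.max/0]_(i < 2) `|v i 0|.

Definition in_CZ (C : nat) (v : vec) : Prop :=
  forall i : 'I_2, exists z : int, v i 0 = C%:R * z%:~R.

(* Main.v *)
Require Import Defs.
From HB Require Import structures.
From mathcomp Require Import all_boot all_order all_algebra.
From mathcomp Require Import zify ring lra.
From Stdlib Require Import Classical.
Import Order.TTheory GRing.Theory Num.Theory.
Local Open Scope ring_scope.

Definition Sz (c a a' : int) : Prop := a = a' \/ (c < a /\ c < a') \/ (a < - c /\ a' < - c).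
Definition gz (ma mb x y : int) : int := ma * y - mb * x.
Definition Goodz (A B x y x' y' : nat) : Prop :=
  forall ma mb : nat, (ma <= B)%N -> (mb <= B)%N ->
    Sz (A*B)%N%:Z (gz ma mb x y) (gz ma mb x' y').
Definition H2z (A x y x' y' : nat) : Prop :=
  (x = x' /\ y = y') \/ (((A < x) || (A < y)) && ((A < x') || (A < y')))%N.
Definition R (A B C x y : nat) : Prop :=
  exists x' y' t1 t2 : nat, x = (x' + C * t1)%N /\ y = (y' + C * t2)%N /\
   (x' <= 3 * (A * B ^ 2 + B * C))%N /\ (y' <= 3 * (A * B ^ 2 + B * C))%N /\
   Goodz A B x y x' y' /\ H2z A x y x' y'.

Lemma Sz_opp c a a' : Sz c a a' -> Sz c (- a) (- a').
Proof. rewrite /Sz => [[->|[[h1 h2]|[h1 h2]]]]; [by left|right;right|right;left]; lra. Qed.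

Lemma R_swap A B C x y : R A B C y x -> R A B C x y.
Proof.
case=> x' [y'] [t1] [t2] [e1 [e2 [b1 [b2 [G H]]]]].
exists y', x', t2, t1; do 4 (split => //).
split.
  move=> ma mb ha hb; have := @Sz_opp _ _ _ (G mb ma hb ha).
  by rewrite /gz !opprB.
case: H => [[-> ->]|/andP[h1 h2]]; [left|right] => //.
by apply/andP; split; rewrite orbC.
Qed.

Lemma case0 A B C x y : (x <= 3 * (A*B^2))%N -> (y <= 3*(A*B^2))%N -> R A B C x y.
Proof.
move=> hx hy; exists x, y, 0%N, 0%N; do 2 (split; first by rewrite muln0 addn0).
split; first lia. split; first lia.
by split; [move=> ma mb _ _; left|left].
Qed.

Lemma reduce (P E S : nat) : (0 < S)%N -> exists k : nat,
  (k * S <= P)%N /\ (k = 0%N \/ E < P - k * S)%N /\ (P - k * S <= E + S)%N.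
Proof.
move=> S0; exists ((P - E - 1) %/ S)%N.
have := divn_eq (P - E - 1) S; have := ltn_pmod (P - E - 1) S0.
set q := ((P - E - 1) %/ S)%N; set r := ((P - E - 1) %% S)%N => hr hq.
case: (leqP P E) => hPE.
  have -> : q = 0%N by rewrite /q divn_small //; lia.
  lia.
split; first lia. split; last lia.
right; lia.
Qed.

Lemma Lsign (AB B a b ma mb u0 u1 : int) : 0 <= AB -> 1 <= a -> a <= B ->
  0 <= ma -> ma <= B -> 0 <= mb -> mb <= B -> 2*(AB*B) < u0 ->
  -AB <= a*u1 - b*u0 -> a*u1 - b*u0 <= AB ->
  (0 < ma*b - mb*a -> AB < ma*u1 - mb*u0) /\ (ma*b - mb*a < 0 -> ma*u1 - mb*u0 < -AB).
Proof.
move=> AB0 a1 aB ma0 maB mb0 mbB hu hF1 hF2.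
have id : (ma*u1 - mb*u0)*a = (ma*b - mb*a)*u0 + (a*u1 - b*u0)*ma by ring.
set g := ma*u1 - mb*u0 in id *; set d := ma*b - mb*a in id *;
set F := a*u1 - b*u0 in id hF1 hF2 *.
have h1 : F*ma <= AB*B by nia.
have h2 : -(AB*B) <= F*ma by nia.
have h3 : AB * a <= AB * B by nia.
split=> hd.
  have : d * u0 >= u0 by nia.
  nia.
have : d * u0 <= - u0 by nia.
nia.
Qed.
Lemma caseB (A B C x y a b : nat) : (0<A)%N -> (0<B)%N -> (0<C)%N -> (b <= a)%N -> (a <= B)%N -> (0 < a)%N ->
  `|gz a b x y| <= (A*B)%N%:Z -> (3*(A*B^2) < x \/ 3*(A*B^2) < y)%N -> R A B C x y.
Proof.
move=> A0 B0 C0 ba aB a0 hF hbig.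
have /andP[hF1 hF2] : -((A*B)%N%:Z) <= gz a b x y <= (A*B)%N%:Z by rewrite -ler_norml.
move: hF1 hF2; rewrite /gz => hF1 hF2.
have hx : (2*(A*B*B) < x)%N.
  rewrite ltnNge; apply/negP => hx.
  case: hbig => h; first by lia.
  nia.
have Ca0 : (0 < C * a)%N by rewrite muln_gt0 C0.
have [k [hk1 [hk2 hk3]]] := @reduce x (2*(A*B*B)) _ Ca0.
have hx' : (2*(A*B*B) < x - k*(C*a))%N by case: hk2 => [->|]; lia.
have hy : (k * (C*b) <= y)%N.
  case: (posnP b) => [->|b0]; first by rewrite !muln0.
  have : (a%:Z * (y%:Z - (k*(C*b))%N%:Z) = a%:Z*y%:Z - b%:Z*x%:Z + b%:Z * (x - k*(C*a))%N%:Z).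
    rewrite -subzn // !PoszM. ring.
  nia.
exists (x - k*(C*a))%N, (y - k*(C*b))%N, (k*a)%N, (k*b)%N.
split; first lia. split; first lia.
split; first nia.
split.
  have : (a%:Z * (y%:Z - (k*(C*b))%N%:Z) = a%:Z*y%:Z - b%:Z*x%:Z + b%:Z * (x - k*(C*a))%N%:Z).
    rewrite -subzn // !PoszM. ring.
  nia.
split; last first.
  right; apply/andP; split; apply/orP; left; nia.
move=> ma mb hma hmb.
have eF : a%:Z * (y - k*(C*b))%N%:Z - b%:Z * (x - k*(C*a))%N%:Z = a%:Z*y%:Z - b%:Z*x%:Z.
  rewrite -!subzn // !PoszM; ring.
have eg : gz ma mb (x - k*(C*a))%N (y - k*(C*b))%N = gz ma mb x y - (k*C)%N%:Z * (ma%:Z*b%:Z - mb%:Z*a%:Z).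
  rewrite /gz -!subzn // !PoszM; ring.
have L1 := @Lsign (A*B)%N B a b ma mb x y.
have L2 := @Lsign (A*B)%N B a b ma mb (x - k*(C*a))%N (y - k*(C*b))%N.
rewrite eF in L2.
have hAB : (2 * ((A*B)%N%:Z * B%:Z) = (2*(A*B*B))%N%:Z) by rewrite !PoszM.
case: (ltrgtP (ma%:Z*b%:Z - mb%:Z*a%:Z) 0) => hd.
- right; right; rewrite /gz; split.
    apply L1 => //; lia.
  apply L2 => //; lia.
- right; left; rewrite /gz; split.
    apply L1 => //; lia.
  apply L2 => //; lia.
- by left; rewrite eg hd mulr0 subr0.
Qed.
Lemma seq_argmax (T : eqType) (f : T -> rat) (s : seq T) : s != [::] ->
  exists2 z, z \in s & forall y, y \in s -> f y <= f z.
Proof.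
elim: s => // x s IH _.
case: (eqVneq s [::]) => [->|sn].
  by exists x; rewrite ?mem_head // => y; rewrite inE => /eqP->.
have [z zs hz] := IH sn.
case: (leP (f x) (f z)) => h.
  exists z; first by rewrite inE zs orbT.
  by move=> y; rewrite inE => /orP[/eqP->|/hz].
exists x; first exact: mem_head.
move=> y; rewrite inE => /orP[/eqP->//|/hz hy]; apply: (le_trans hy); exact: ltW.
Qed.

Definition key (m : nat * nat) : rat := m.2%:R / (m.1 + m.2)%N%:R.

Lemma key_le a b c d : (0 < a + b)%N -> (0 < c + d)%N ->
  (key (a,b) <= key (c,d)) = (b * c <= a * d)%N.
Proof.
move=> h1 h2; rewrite /key /= ler_pdivrMr ?ltr0n // mulrAC ler_pdivlMr ?ltr0n //.
rewrite -!natrM ler_nat; apply/idP/idP => h; nia.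
Qed.

Lemma key_lt a b c d : (0 < a + b)%N -> (0 < c + d)%N ->
  (key (a,b) < key (c,d)) = (b * c < a * d)%N.
Proof.
move=> h1 h2; rewrite /key /= ltr_pdivrMr ?ltr0n // mulrAC ltr_pdivlMr ?ltr0n //.
rewrite -!natrM ltr_nat; apply/idP/idP => h; nia.
Qed.

Lemma comb (AB D P Q P' Q' e1 e2 g g' : int) : 0 <= AB -> 0 < D -> 0 <= e1 -> 0 <= e2 ->
  0 < P' -> 0 < Q' -> (P' = P \/ D*AB < P') -> (Q' = Q \/ D*AB < Q') ->
  D*g = P*e1 + Q*e2 -> D*g' = P'*e1 + Q'*e2 -> AB < g -> g' = g \/ AB < g'.
Proof.
move=> AB0 D0 e10 e20 P0 Q0 hP hQ eg eg' hg.
have eqD : forall u u' : int, D * u = D * u' -> u = u'.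
  by move=> u u' /(mulfI (lt0r_neq0 D0)).
case: hP => [eP|hP]; case: hQ => [eQ|hQ].
- by left; apply: eqD; rewrite eg eg' eP eQ.
- have [e2z|e2p] := eqVneq e2 0.
    by left; apply: eqD; rewrite eg eg' eP e2z !mulr0.
  right; have : 0 < e2 by rewrite lt_neqAle eq_sym e2p e20.
  nia.
- have [e1z|e1p] := eqVneq e1 0.
    by left; apply: eqD; rewrite eg eg' eQ e1z !mulr0.
  right; have : 0 < e1 by rewrite lt_neqAle eq_sym e1p e10.
  nia.
- right.
  have [e1z|e1p] := eqVneq e1 0.
    have [e2z|e2p] := eqVneq e2 0.
      move: eg; rewrite e1z e2z !mulr0 addr0 => /eqP; rewrite mulf_eq0 gt_eqF //=.
      move/eqP=> g0; lra.
    have : 0 < e2 by rewrite lt_neqAle eq_sym e2p e20.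
    nia.
  have : 0 < e1 by rewrite lt_neqAle eq_sym e1p e10.
  nia.
Qed.
Lemma caseA (A B C x y : nat) : (0<A)%N -> (0<B)%N -> (0<C)%N ->
  (forall a b : nat, (a <= B)%N -> (b <= B)%N -> (0 < a + b)%N ->
     (A*B)%N%:Z < `|gz a b x y|) -> R A B C x y.
Proof.
move=> A0 B0 C0 NB.
have hy : (A*B < y)%N.
  have := NB 1%N 0%N B0 (leq0n _) isT; rewrite /gz mul1r mul0r subr0; lia.
have hx : (A*B < x)%N.
  have := NB 0%N 1%N (leq0n _) B0 isT; rewrite /gz mul1r mul0r sub0r; lia.
set bx := [seq (i,j) | i <- iota 0 B.+1, j <- iota 0 B.+1].
have inbx : forall a b, (a <= B)%N -> (b <= B)%N -> (a,b) \in bx.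
  move=> a b ha hb.
  have hi : a \in iota 0 B.+1 by have := mem_iota 0 B.+1 a; rewrite /= add0n ltnS ha => h; exact: h.
  have hj : b \in iota 0 B.+1 by have := mem_iota 0 B.+1 b; rewrite /= add0n ltnS hb => h; exact: h.
  exact: (@allpairs_f _ _ _ pair _ _ _ _ hi hj).
have bxin : forall m, m \in bx -> (m.1 <= B)%N /\ (m.2 <= B)%N.
  move=> m /allpairsP [[i j] [/= hi hj ->]] /=.
  have h1 : (0 <= i < 0 + B.+1)%N by rewrite -(mem_iota 0 B.+1 i); exact: hi.
  have h2 : (0 <= j < 0 + B.+1)%N by rewrite -(mem_iota 0 B.+1 j); exact: hj.
  lia.
set Pp := fun m : nat * nat => (0 < m.1 + m.2)%N && (0 < gz m.1 m.2 x y).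
set Pm := fun m : nat * nat => (0 < m.1 + m.2)%N && (gz m.1 m.2 x y < 0).
have h10 : (1,0)%N \in filter Pp bx.
  rewrite mem_filter inbx // andbT /Pp /= /gz mul1r mul0r subr0; lia.
have h01 : (0,1)%N \in filter Pm bx.
  rewrite mem_filter inbx // andbT /Pm /= /gz mul1r mul0r sub0r; lia.
have ne1 : filter Pp bx != [::] by apply/negP => /eqP e; rewrite e in h10.
have ne2 : filter Pm bx != [::] by apply/negP => /eqP e; rewrite e in h01.
have [[a1 b1] m1in hm1] := @seq_argmax _ key _ ne1.
have [[a2 b2] m2in hm2] := @seq_argmax _ (fun m => - key m) _ ne2.
move: m1in; rewrite mem_filter => /andP[/andP[/= nz1 pos1] /bxin [/= a1B b1B]].
move: m2in; rewrite mem_filter => /andP[/andP[/= nz2 neg2] /bxin [/= a2B b2B]].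
move: pos1 neg2; rewrite /gz => pos1 neg2.
have c1 : (b1 * x < a1 * y)%N by lia.
have c2 : (a2 * y < b2 * x)%N by lia.
have xy0 : (0 < x + y)%N by lia.
have cD : (b1 * a2 < a1 * b2)%N.
  rewrite -key_lt //; apply: (@lt_trans _ _ (key (x,y))).
    by rewrite key_lt.
  by rewrite key_lt // mulnC [(x * _)%N]mulnC.
set Pn := (b2 * x - a2 * y)%N. set Qn := (a1 * y - b1 * x)%N.
set Dn := (a1 * b2 - b1 * a2)%N.
have Dn0 : (0 < Dn)%N by rewrite /Dn subn_gt0.
have Pn0 : (0 < Pn)%N by rewrite /Pn subn_gt0.
have Qn0 : (0 < Qn)%N by rewrite /Qn subn_gt0.
have idx : Dn%:Z * x%:Z = Pn%:Z * a1%:Z + Qn%:Z * a2%:Z.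
  rewrite /Dn /Pn /Qn -!subzn; try exact: ltnW. rewrite !PoszM; ring.
have idy : Dn%:Z * y%:Z = Pn%:Z * b1%:Z + Qn%:Z * b2%:Z.
  rewrite /Dn /Pn /Qn -!subzn; try exact: ltnW. rewrite !PoszM; ring.
have S0 : (0 < C * Dn)%N by rewrite muln_gt0 C0.
have [k1 [hk1 [hk1b hk1c]]] := @reduce Pn (Dn * (A*B)) (C*Dn) S0.
have [k2 [hk2 [hk2b hk2c]]] := @reduce Qn (Dn * (A*B)) (C*Dn) S0.
set P' := (Pn - k1 * (C * Dn))%N. set Q' := (Qn - k2 * (C * Dn))%N.
have P'0 : (0 < P')%N by case: hk1b => [e|]; [rewrite /P' e mul0n subn0|lia].
have Q'0 : (0 < Q')%N by case: hk2b => [e|]; [rewrite /Q' e mul0n subn0|lia].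
set t1 := (k1 * a1 + k2 * a2)%N. set t2 := (k1 * b1 + k2 * b2)%N.
have idx' : Dn%:Z * (x%:Z - (C * t1)%N%:Z) = P'%:Z * a1%:Z + Q'%:Z * a2%:Z.
  rewrite /P' /Q' -(subzn hk1) -(subzn hk2) mulrBr idx /t1 !PoszM PoszD !PoszM; ring.
have idy' : Dn%:Z * (y%:Z - (C * t2)%N%:Z) = P'%:Z * b1%:Z + Q'%:Z * b2%:Z.
  rewrite /P' /Q' -(subzn hk1) -(subzn hk2) mulrBr idy /t2 !PoszM PoszD !PoszM; ring.
have D0z : 0 < Dn%:Z by rewrite ltz_nat.
have ht1 : (C * t1 <= x)%N.
  have : 0 <= x%:Z - (C*t1)%N%:Z.
    by rewrite -(pmulr_rge0 _ D0z) idx' addr_ge0 // mulr_ge0.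
  lia.
have ht2 : (C * t2 <= y)%N.
  have : 0 <= y%:Z - (C*t2)%N%:Z.
    by rewrite -(pmulr_rge0 _ D0z) idy' addr_ge0 // mulr_ge0.
  lia.
have idx2 : Dn%:Z * (x - C * t1)%N%:Z = P'%:Z * a1%:Z + Q'%:Z * a2%:Z by rewrite -subzn.
have idy2 : Dn%:Z * (y - C * t2)%N%:Z = P'%:Z * b1%:Z + Q'%:Z * b2%:Z by rewrite -subzn.
have Good : Goodz A B x y (x - C * t1) (y - C * t2).
  move=> ma mb hma hmb.
  case: (posnP (ma + mb)) => [e0|mnz].
    have [-> ->] : ma = 0%N /\ mb = 0%N by lia.
    by left; rewrite /gz !mul0r subr0.
  have hg := NB ma mb hma hmb mnz.
  have eg : Dn%:Z * gz ma mb x y = Pn%:Z * gz ma mb a1 b1 + Qn%:Z * gz ma mb a2 b2.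
    have -> : Dn%:Z * gz ma mb x y = ma%:Z * (Dn%:Z * y%:Z) - mb%:Z * (Dn%:Z * x%:Z) by rewrite /gz; ring.
    rewrite idx idy /gz; ring.
  have eg' : Dn%:Z * gz ma mb (x - C*t1)%N (y - C*t2)%N
       = P'%:Z * gz ma mb a1 b1 + Q'%:Z * gz ma mb a2 b2.
    have -> : Dn%:Z * gz ma mb (x - C*t1)%N (y - C*t2)%N = ma%:Z * (Dn%:Z * (y - C*t2)%N%:Z) - mb%:Z * (Dn%:Z * (x - C*t1)%N%:Z) by rewrite /gz; ring.
    rewrite idx2 idy2 /gz; ring.
  have mbx : (ma, mb) \in bx by apply: inbx.
  have hP : P'%:Z = Pn \/ (Dn * (A*B))%N%:Z < P'%:Z.
    by case: hk1b => [e|h]; [left; rewrite /P' e mul0n subn0|right; rewrite ltz_nat].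
  have hQ : Q'%:Z = Qn \/ (Dn * (A*B))%N%:Z < Q'%:Z.
    by case: hk2b => [e|h]; [left; rewrite /Q' e mul0n subn0|right; rewrite ltz_nat].
  rewrite PoszM in hP hQ.
  have P0z : 0 < P'%:Z by rewrite ltz_nat.
  have Q0z : 0 < Q'%:Z by rewrite ltz_nat.
  case: (ltrgt0P (gz ma mb x y)) => hs.
  + have hin : (ma, mb) \in filter Pp bx by rewrite mem_filter mbx andbT /Pp /= mnz hs.
    have k1le := hm1 _ hin; move: (k1le); rewrite key_le // => k1le'.
    have k2lt : key (ma, mb) < key (a2, b2).
      apply: (le_lt_trans k1le); rewrite key_lt //.
    move: k2lt; rewrite key_lt // => k2lt.
    have gAB : (A * B)%N%:Z < gz ma mb x y by lia.
    have e1n : 0 <= gz ma mb a1 b1 by rewrite /gz; lia.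
    have e2n : 0 <= gz ma mb a2 b2 by rewrite /gz; lia.
    have := @comb (A*B)%N Dn Pn Qn P' Q' (gz ma mb a1 b1) (gz ma mb a2 b2) _ _ (leq0n _)
       D0z e1n e2n P0z Q0z hP hQ eg eg' gAB.
    by case=> [->|h]; [left|right; left].
  + have hin : (ma, mb) \in filter Pm bx by rewrite mem_filter mbx andbT /Pm /= mnz hs.
    have k2le := hm2 _ hin; rewrite lerN2 in k2le.
    have k12 : key (a1, b1) < key (a2, b2) by rewrite key_lt.
    have k1lt := lt_le_trans k12 k2le.
    move: k2le k1lt; rewrite key_le // key_lt // => k2le k1lt.
    have gAB : (A * B)%N%:Z < - gz ma mb x y by lia.
    have eg2 : Dn%:Z * - gz ma mb x y = Pn%:Z * - gz ma mb a1 b1 + Qn%:Z * - gz ma mb a2 b2.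
      by rewrite !mulrN eg opprD.
    have eg2' : Dn%:Z * - gz ma mb (x - C*t1)%N (y - C*t2)%N
       = P'%:Z * - gz ma mb a1 b1 + Q'%:Z * - gz ma mb a2 b2.
      by rewrite !mulrN eg' opprD.
    have e1n : 0 <= - gz ma mb a1 b1 by rewrite /gz; lia.
    have e2n : 0 <= - gz ma mb a2 b2 by rewrite /gz; lia.
    have := @comb (A*B)%N Dn Pn Qn P' Q' _ _ _ _ (leq0n _)
       D0z e1n e2n P0z Q0z hP hQ eg2 eg2' gAB.
    case=> [/oppr_inj ->|h]; [by left|right; right; split; [by rewrite ltrNr in gAB|by rewrite ltrNr in h]].
  + by lia.
have hA : (A <= A * B)%N by rewrite leq_pmulr.
have hy' : (A * B < y - C * t2)%N.
  have := Good 1%N 0%N B0 (leq0n _); rewrite /gz !mul1r !mul0r !subr0.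
  case=> [e|[[_ h]|[h _]]]; lia.
have bnd : forall (P' Q' a1 a2 x' : nat), (P' <= Dn * (A*B) + C*Dn)%N ->
    (Q' <= Dn * (A*B) + C*Dn)%N -> (a1 <= B)%N -> (a2 <= B)%N ->
    Dn%:Z * x'%:Z = P'%:Z * a1%:Z + Q'%:Z * a2%:Z ->
    (x' <= 3 * (A * B ^ 2 + B * C))%N.
  move=> p q u1 u2 z hp hq h1 h2 e.
  have e' : (Dn * z = p * u1 + q * u2)%N by apply/eqP; rewrite -eqz_nat PoszD !PoszM e.
  have l1 : (p * u1 <= (Dn * (A*B) + C*Dn) * B)%N by apply: leq_mul.
  have l2 : (q * u2 <= (Dn * (A*B) + C*Dn) * B)%N by apply: leq_mul.
  have : (Dn * z <= Dn * (3 * (A * B ^ 2 + B * C)))%N.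
    rewrite e'; apply: (leq_trans (leq_add l1 l2)).
    have -> : ((Dn * (A * B) + C * Dn) * B + (Dn * (A * B) + C * Dn) * B
       = Dn * (2 * (A * B * B + B * C)))%N by ring.
    rewrite leq_pmul2l // expnS expn1; lia.
  by rewrite leq_pmul2l.
exists (x - C * t1)%N, (y - C * t2)%N, t1, t2.
split; first by rewrite subnK.
split; first by rewrite subnK.
split; first exact: (bnd P' Q' a1 a2).
split; first exact: (bnd P' Q' b1 b2).
split => //.
right; apply/andP; split; apply/orP; right; lia.
Qed.
Definition Sr0 (x x' : rat) : Prop := x = x' \/ (0 < x /\ 0 < x') \/ (x < 0 /\ x' < 0).

Lemma Sr0_ge0 x x' : Sr0 x x' -> 0 <= x -> 0 <= x'.
Proof. case=> [->//|[[_ h]|[h _]]] h'; lra. Qed.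

Lemma Sr0_eq0 x x' : Sr0 x x' -> x = 0 -> x' = 0.
Proof. case=> [->//|[[h _]|[h _]]] h'; lra. Qed.

Lemma Sr0_scale x x' d : d != 0 -> Sr0 x x' -> Sr0 (x * d) (x' * d).
Proof.
move=> d0; case=> [->|]; first by left.
case: (ltrgt0P d) d0 => // hd _.
  case=> [[h1 h2]|[h1 h2]]; right; [left|right]; split; nra.
case=> [[h1 h2]|[h1 h2]]; right; [right|left]; split; nra.
Qed.

Arguments Sr0_ge0 {x x'}.
Arguments Sr0_eq0 {x x'}.
Arguments Sr0_scale {x x' d}.

Lemma ray (c0 c1 z0 z1 : rat) : 0 <= c0 -> 0 <= c1 -> 0 < c0 + c1 ->
  c0 * z1 - c1 * z0 = 0 -> (0 < z0 \/ 0 < z1) ->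
  exists s, 0 <= s /\ z0 = s * c0 /\ z1 = s * c1.
Proof.
move=> h0 h1 h01 e hz.
case: (ltrgt0P c0) h0 => // hc0 _.
  exists (z0 / c0).
  have z0p : 0 <= z0 by case: hz => hz; nra.
  split; first by apply: divr_ge0 => //; lra.
  split; first by rewrite divfK // gt_eqF.
  apply: (mulfI (lt0r_neq0 hc0)).
  have -> : c0 * (z0 / c0 * c1) = (z0 * c1) * (c0 / c0) by ring.
  rewrite divff ?gt_eqF // mulr1; lra.
have c1p : 0 < c1 by lra.
move: e; rewrite hc0 mul0r sub0r => /eqP; rewrite oppr_eq0 mulf_eq0 (gt_eqF c1p) /= => /eqP z00.
exists (z1 / c1); split; first by apply: divr_ge0 => //; case: hz; lra.
split; first by rewrite z00 mulr0.
by rewrite divfK // gt_eqF.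
Qed.

Arguments ray {c0 c1 z0 z1}.

Lemma transfer_sc (m00 m01 m10 m11 l0 l1 z0 z1 z0' z1' : rat) :
  0 <= m00 -> 0 <= m01 -> 0 <= m10 -> 0 <= m11 -> 0 <= l0 -> 0 <= l1 ->
  z0 = m00 * l0 + m01 * l1 -> z1 = m10 * l0 + m11 * l1 ->
  Sr0 (m00 * z1 - m10 * z0) (m00 * z1' - m10 * z0') ->
  Sr0 (m01 * z1 - m11 * z0) (m01 * z1' - m11 * z0') ->
  (z0 = z0' /\ z1 = z1') \/ ((0 < z0 \/ 0 < z1) /\ (0 < z0' \/ 0 < z1')) ->
  exists l0' l1', 0 <= l0' /\ 0 <= l1' /\ z0' = m00 * l0' + m01 * l1' /\ z1' = m10 * l0' + m11 * l1'.
Proof.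
move=> h00 h01 h10 h11 hl0 hl1 e0 e1 S0 S1 [[<- <-]|[pz pz']].
  by exists l0, l1.
set D := m00 * m11 - m01 * m10.
have c0z : m00 * z1 - m10 * z0 = D * l1 by rewrite e0 e1 /D; ring.
have c1z : m01 * z1 - m11 * z0 = - (D * l0) by rewrite e0 e1 /D; ring.
have [D0|Dn0] := eqVneq D 0.
  have c0z' : m00 * z1' - m10 * z0' = 0 by apply: (Sr0_eq0 S0); rewrite c0z D0 mul0r.
  have c1z' : m01 * z1' - m11 * z0' = 0 by apply: (Sr0_eq0 S1); rewrite c1z D0 mul0r oppr0.
  case: (ltrgt0P (m00 + m10)) => hs; first 2 last.
    case: (ltrgt0P (m01 + m11)) => ht; first 2 last.
      have z00 : z0 = 0 by rewrite e0; nra.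
      have z10 : z1 = 0 by rewrite e1; nra.
      by exfalso; case: pz; lra.
    - have [s [s0 [e0' e1']]] := ray h01 h11 ht c1z' pz'.
      by exists 0, s; split => //; split => //; split; [rewrite e0'|rewrite e1']; ring.
    - by exfalso; lra.
  - have [s [s0 [e0' e1']]] := ray h00 h10 hs c0z' pz'.
    by exists s, 0; split => //; split => //; split; [rewrite e0'|rewrite e1']; ring.
  - by exfalso; lra.
exists (- (m01 * z1' - m11 * z0') / D), ((m00 * z1' - m10 * z0') / D).
have nz : - D^-1 != 0 by rewrite oppr_eq0 invr_eq0.
have nz' : D^-1 != 0 by rewrite invr_eq0.
split.
  have h : 0 <= (m01 * z1 - m11 * z0) * - D^-1.
    by rewrite c1z mulrN mulNr opprK mulrAC divff // mul1r.
  by have := Sr0_ge0 (Sr0_scale nz S1) h; rewrite mulrN -mulNr.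
split.
  have h : 0 <= (m00 * z1 - m10 * z0) * D^-1.
    by rewrite c0z mulrAC divff // mul1r.
  exact: Sr0_ge0 (Sr0_scale nz' S0) h.
split; rewrite /D; field; exact: Dn0.
Qed.
Definition i0 : 'I_2 := ord0.
Definition i1 : 'I_2 := @Ordinal 2 1 isT.

Lemma ord2 (i : 'I_2) : i = i0 \/ i = i1.
Proof. case: i => [[|[|n]]] Hi; [left|right|by []]; exact: val_inj. Qed.

Lemma ord1' (j : 'I_1) : j = 0.
Proof. by rewrite [j]ord1. Qed.

Lemma col_eq (u v : vec) : u i0 0 = v i0 0 -> u i1 0 = v i1 0 -> u = v.
Proof.
move=> h0 h1; apply/matrixP => i j; rewrite [j]ord1.
by case: (ord2 i) => ->.
Qed.

Lemma mulE (M : 'M[rat]_2) (l : vec) i : (M *m l) i 0 = M i i0 * l i0 0 + M i i1 * l i1 0.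
Proof.
rewrite mxE big_ord_recr big_ord_recr big_ord0 /= add0r.
have -> : widen_ord (leqnSn 1) ord_max = i0 by apply: val_inj.
by have -> : (ord_max : 'I_2) = i1 by apply: val_inj.
Qed.

Definition mk (a b : rat) : vec := \col_(i < 2) (if i == i0 then a else b).
Lemma mk0 a b : mk a b i0 0 = a. Proof. by rewrite mxE. Qed.
Lemma mk1 a b : mk a b i1 0 = b. Proof. by rewrite mxE. Qed.

Definition Sr (c a a' : rat) : Prop := a = a' \/ (c < a /\ c < a') \/ (a < - c /\ a' < - c).

Lemma Sr_sym c a a' : Sr c a a' -> Sr c a' a.
Proof. rewrite /Sr; case=> [->|[[h1 h2]|[h1 h2]]]; [left|right;left|right;right] => //. Qed.

Lemma Sshift c a a' b : Sr c a a' -> - c <= b -> b <= c -> Sr0 (a - b) (a' - b).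
Proof. rewrite /Sr /Sr0; case=> [->|[[h1 h2]|[h1 h2]]] hb1 hb2; [left|right;left|right;right]; lra. Qed.

Lemma transfer1 (A B : nat) (u u' w : vec) (M : 'M[rat]_2) :
  ratbox A w -> intmat B M ->
  (forall ma mb : nat, (ma <= B)%N -> (mb <= B)%N ->
     Sr (A*B)%N%:R (ma%:R * u i1 0 - mb%:R * u i0 0) (ma%:R * u' i1 0 - mb%:R * u' i0 0)) ->
  (u = u' \/ ((A%:R < u i0 0 \/ A%:R < u i1 0) /\ (A%:R < u' i0 0 \/ A%:R < u' i1 0))) ->
  in_angle w M u -> in_angle w M u'.
Proof.
move=> hw hM H1 H2 [lam [hlam eu]].
have [w00 w0A] := hw i0; have [w10 w1A] := hw i1.
have [k00 [k00B e00]] := hM i0 i0; have [k01 [k01B e01]] := hM i0 i1.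
have [k10 [k10B e10]] := hM i1 i0; have [k11 [k11B e11]] := hM i1 i1.
have col : forall ma mb : nat, (ma <= B)%N -> (mb <= B)%N ->
   Sr0 (ma%:R * (u i1 0 - w i1 0) - mb%:R * (u i0 0 - w i0 0))
       (ma%:R * (u' i1 0 - w i1 0) - mb%:R * (u' i0 0 - w i0 0)).
  move=> ma mb hma hmb.
  have hma' : ma%:R <= B%:R :> rat by rewrite ler_nat.
  have hmb' : mb%:R <= B%:R :> rat by rewrite ler_nat.
  have ma0 : 0 <= ma%:R :> rat by rewrite ler0n.
  have mb0 : 0 <= mb%:R :> rat by rewrite ler0n.
  have eAB : (A*B)%N%:R = A%:R * B%:R :> rat by rewrite natrM.
  have b1 : ma%:R * w i1 0 <= (A*B)%N%:R by rewrite eAB mulrC; apply: ler_pM.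
  have b2 : mb%:R * w i0 0 <= (A*B)%N%:R by rewrite eAB mulrC; apply: ler_pM.
  have b3 : 0 <= ma%:R * w i1 0 by apply: mulr_ge0.
  have b4 : 0 <= mb%:R * w i0 0 by apply: mulr_ge0.
  have := @Sshift _ _ _ (ma%:R * w i1 0 - mb%:R * w i0 0) (H1 ma mb hma hmb).
  have E : forall uu : vec, ma%:R * (uu i1 0 - w i1 0) - mb%:R * (uu i0 0 - w i0 0)
     = ma%:R * uu i1 0 - mb%:R * uu i0 0 - (ma%:R * w i1 0 - mb%:R * w i0 0) by move=> uu; ring.
  rewrite !E; apply; lra.
have hz0 : u i0 0 - w i0 0 = M i0 i0 * lam i0 0 + M i0 i1 * lam i1 0 by rewrite eu mxE mulE; ring.
have hz1 : u i1 0 - w i1 0 = M i1 i0 * lam i0 0 + M i1 i1 * lam i1 0 by rewrite eu mxE mulE; ring.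
have S0 := col k00 k10 k00B k10B. have S1 := col k01 k11 k01B k11B.
rewrite -e00 -e10 in S0; rewrite -e01 -e11 in S1.
have H2' : (u i0 0 - w i0 0 = u' i0 0 - w i0 0 /\ u i1 0 - w i1 0 = u' i1 0 - w i1 0) \/
   ((0 < u i0 0 - w i0 0 \/ 0 < u i1 0 - w i1 0) /\ (0 < u' i0 0 - w i0 0 \/ 0 < u' i1 0 - w i1 0)).
  case: H2 => [<-|[h h']]; first by left.
  by right; split; [case: h => hh; [left|right]|case: h' => hh; [left|right]]; lra.
have p00 : 0 <= M i0 i0 by rewrite e00 ler0n.
have p01 : 0 <= M i0 i1 by rewrite e01 ler0n.
have p10 : 0 <= M i1 i0 by rewrite e10 ler0n.
have p11 : 0 <= M i1 i1 by rewrite e11 ler0n.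
have [l0 [l1 [hl0 [hl1 [f0 f1]]]]] := @transfer_sc (M i0 i0) (M i0 i1) (M i1 i0) (M i1 i1) (lam i0 0) (lam i1 0)
   _ _ _ _ p00 p01 p10 p11 (hlam i0) (hlam i1) hz0 hz1 S0 S1 H2'.
idtac.
exists (mk l0 l1); split.
  by move=> i; case: (ord2 i) => ->; rewrite ?mk0 ?mk1.
apply: col_eq; rewrite mxE mulE mk0 mk1; [rewrite -f0|rewrite -f1]; ring.
Qed.
Lemma pair_big A B C x y : (0 < A)%N -> (0 < B)%N -> (0 < C)%N ->
  (3*(A*B^2) < x \/ 3*(A*B^2) < y)%N -> R A B C x y.
Proof.
move=> A0 B0 C0 hbig.
case: (classic (exists a b : nat, [/\ (a <= B)%N, (b <= B)%N, (0 < a + b)%N &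
                `|gz a b x y| <= (A*B)%N%:Z])) => [[a [b [ha hb hab hF]]]|hn].
  case: (leqP b a) => hba.
    by apply: (@caseB A B C x y a b) => //; lia.
  apply: R_swap; apply: (@caseB A B C y x b a) => //; try lia.
  by rewrite /gz -normrN opprB.
apply: caseA => // a b ha hb hab; rewrite ltNge; apply/negP => hF.
by apply: hn; exists a, b; split.
Qed.

Lemma pair_main A B C x y : (0 < A)%N -> (0 < B)%N -> (0 < C)%N -> R A B C x y.
Proof.
move=> A0 B0 C0.
case: (leqP x (3 * (A * B ^ 2))) => hx; case: (leqP y (3 * (A * B ^ 2))) => hy.
- exact: case0.
all: by apply: pair_big => //; lia.
Qed.

Lemma Sz_Sr c a a' : Sz c a a' -> Sr c%:~R a%:~R a'%:~R.
Proof.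
rewrite /Sz /Sr; case=> [->|[[h1 h2]|[h1 h2]]]; [left|right;left|right;right] => //;
  rewrite -?rmorphN /= !ltr_int //.
Qed.

Lemma gz_cast (ma mb x y : nat) :
  (gz ma mb x y)%:~R = ma%:R * y%:R - mb%:R * x%:R :> rat.
Proof. by rewrite /gz rmorphB /= !rmorphM /= !pmulrn. Qed.

Lemma vnorm_le (v : vec) (b : rat) : 0 <= b -> `|v i0 0| <= b -> `|v i1 0| <= b -> vnorm v <= b.
Proof.
move=> b0 h0 h1; rewrite /vnorm; elim/big_ind: _ => //.
  by move=> p q hp hq; rewrite ge_max hp hq.
by move=> i _; case: (ord2 i) => ->.
Qed.

Theorem lemma3 :
  exists K : rat, 0 <= K /\
    forall (A B C : nat), (0 < A)%N -> (0 < B)%N -> (0 < C)%N ->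
    forall v : vec, natvec v ->
      exists v' : vec,
        natvec v' /\
        vnorm v' <= K * (A * B ^ 2 + B * C)%N%:R /\
        in_reg A B v v' /\
        in_CZ C (v - v').
Proof.
exists 3%:R; split => //.
move=> A B C A0 B0 C0 v hv.
have [x ex] := hv i0; have [y ey] := hv i1.
have [x' [y' [t1 [t2 [e1 [e2 [b1 [b2 [G H]]]]]]]]] := @pair_main A B C x y A0 B0 C0.
exists (mk x'%:R y'%:R).
split.
  by move=> i; case: (ord2 i) => ->; [exists x'; rewrite mk0|exists y'; rewrite mk1].
split.
  apply: vnorm_le; first by apply: mulr_ge0.
    by rewrite mk0 normr_nat -natrM ler_nat.
  by rewrite mk1 normr_nat -natrM ler_nat.
split.
  split.
    by move=> i; case: (ord2 i) => ->; rewrite ?mk0 ?mk1 ler0n.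
  have H1 : forall ma mb : nat, (ma <= B)%N -> (mb <= B)%N ->
     Sr (A*B)%N%:R (ma%:R * v i1 0 - mb%:R * v i0 0)
        (ma%:R * mk x'%:R y'%:R i1 0 - mb%:R * mk x'%:R y'%:R i0 0).
    move=> ma mb hma hmb; rewrite ex ey mk0 mk1 -!gz_cast.
    exact: Sz_Sr (G ma mb hma hmb).
  have H2 : v = mk x'%:R y'%:R \/
     ((A%:R < v i0 0 \/ A%:R < v i1 0) /\
      (A%:R < mk x'%:R y'%:R i0 0 \/ A%:R < mk x'%:R y'%:R i1 0)).
    case: H => [[ex' ey']|/andP[/orP h /orP h']].
      by left; apply: col_eq; [rewrite mk0 ex ex'|rewrite mk1 ey ey'].
    right; rewrite ex ey mk0 mk1 !ltr_nat; split.
      by case: h; [left|right].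
    by case: h'; [left|right].
  move=> w M hw hM; split.
    exact: transfer1 hw hM H1 H2.
  apply: transfer1 hw hM _ _.
    by move=> ma mb hma hmb; apply: Sr_sym; apply: H1.
  case: H2 => [<-|[h h']]; [by left|by right].
have Esub : forall (u u' : vec) i, (u - u') i 0 = u i 0 - u' i 0 by move=> *; rewrite !mxE.
move=> i; case: (ord2 i) => ->; rewrite Esub ?mk0 ?mk1.
  by exists t1%:Z; rewrite ex e1 natrD natrM pmulrn; ring.
by exists t2%:Z; rewrite ey e2 natrD natrM pmulrn; ring.
Qed.
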